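(* Let $\mathcal{R}$ be a term rewrite system and let $M=(S,s_0,L,\delta,\mathit{out})$ be a set automaton constructed from $\mathcal{R}$ (as described in the context). Let $t,t'$ be ground terms, $ct,ct'$ configuration trees and $p$ a position. Then: (i) if $ct\sqsubseteq\mathit{completed}(t)$ then $\mathit{grow}(ct,s,q,t)\sqsubseteq\mathit{completed}(t)$ for all $(s,q)\in\mathit{buds}(ct)$; (ii) if $ct\sqsubseteq ct'$ then $\mathit{prune}(ct,p)\sqsubseteq\mathit{prune}(ct',p)$; (iii) $\mathit{prune}(ct,p)\sqsubseteq ct$; (iv) if $t\xrightarrow{(\ell\to r)@p}t'$ for some rule $\ell\to r\in\mathcal{R}$, then $\mathit{prune}(\mathit{completed}(t),p)=\mathit{prune}(\mathit{completed}(t'),p)$; (v) if $ct[p]$ exists then $\mathit{nodes}(\mathit{prune}(ct,p))=\mathit{nodes}(ct)\setminus\mathit{nodes}(ct[p])$.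
   Context: Terms: $\mathbb{F}$ is a finite ranked alphabet with arity map $\#$, $\mathbb{V}$ a set of variables, $\mathbb{T}(\mathbb{F},\mathbb{V})$ the terms. Positions are finite lists of positive integers; $\epsilon$ is the empty list, $p.q$ concatenation, $p\le q$ means $p$ is a prefix of $q$. $\mathcal{D}(t)$ is the set of positions of $t$, $\mathcal{E}(t)\subseteq\mathcal{D}(t)$ those holding variables, $t|_p$ the subterm at $p$, $t[u]_p$ replacement, $\mathrm{hd}(t)$ the head symbol. A TRS $\mathcal{R}$ is a finite nonempty set of rules $\ell\to r$ with $\ell$ not a variable and $\mathrm{vars}(r)\subseteq\mathrm{vars}(\ell)$; $\mathcal{L}$ is its set of left-hand sides. $t\xrightarrow{(\ell\to r)@p}t'$ means $t=u[\ell^\sigma]_p$ and $t'=u[r^\sigma]_p$ for some term $u$ and substitution $\sigma$. Set automaton construction. Let $\mathrm{sub}(\mathcal{L})$ be the set of subterms $\ell|_q$ with $\ell\in\mathcal{L}$, $q\in\mathcal{D}(\ell)\setminus\mathcal{E}(\ell)$. A match goal, written $\ell_1@p_1,\dots,\ell_n@p_n\hookrightarrow\ell@p$ ($n\ge1$), consists of a nonempty obligation $mo=\{\ell_1@p_1,\dots,\ell_n@p_n\}$ with $\ell_i\in\mathrm{sub}(\mathcal{L})$ and an announcement $\ell@p$ with $\ell\in\mathcal{L}$; $\mathrm{pos}(mo)=\{p_1,\dots,p_n\}$. States are nonempty sets of match goals; $s_0=\{\ell@\epsilon\hookrightarrow\ell@\epsilon\mid\ell\in\mathcal{L}\}$;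 $S$ is the set of states reachable from $s_0$ via $\delta$. Each state $s$ gets a fixed label $L(s)\in\mathrm{pos}(mo)$ for some goal $mo\hookrightarrow\ell@\epsilon\in s$. Let $\mathrm{reduce}(mo,f,p)=\{\ell'@q\in mo\mid q\ne p\}\cup\{\ell'|_i@p.i\mid \ell'@p\in mo,1\le i\le\#f,\ell'|_i\notin\mathbb{V}\}$. For $f\in\mathbb{F}$, $\mathrm{deriv}(s,f)$ is the union of: $\{\mathrm{reduce}(mo,f,L(s))\hookrightarrow ma\mid mo\hookrightarrow ma\in s,\ \exists\ell'.\ \ell'@L(s)\in mo\wedge\mathrm{hd}(\ell')=f,\ \mathrm{reduce}(mo,f,L(s))\neq\emptyset\}$; $\{mo\hookrightarrow ma\in s\mid L(s)\notin\mathrm{pos}(mo)\}$; and $\{\ell@L(s).i\hookrightarrow\ell@L(s).i\mid\ell\in\mathcal{L},1\le i\le\#f\}$. Two goals are directly dependent if their obligation position sets intersect; dependency is the transitive closure, an equivalence. For an equivalence class $K$ of $\mathrm{deriv}(s,f)$, $\mathrm{gcp}(K)$ is the greatest common prefix of the announcement positions of $K$, and $\mathrm{lift}(K)$ is obtained by removing the prefix $\mathrm{gcp}(K)$ from every position occurring in $K$. Then $\delta(s,f)=\{(\mathrm{lift}(K),\mathrm{gcp}(K))\mid K$ a dependency class of $\mathrm{deriv}(s,f)\}$ and $\mathit{out}(s,f)=\{(\ell\to r)@p\mid\ell\to r\in\mathcal{R},\ f(x_1,\dots,x_{\#f})@L(s)\hookrightarrow\ell@p\in s,\ x_i\in\mathbb{V}\}$.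 Configuration trees: $ct::=\mathit{bud}(s,p)\mid\mathit{node}(s,p,cts)$ with $(s,p)\in S\times$positions and $cts$ a finite, possibly empty set of configuration trees. $\mathit{buds}(ct)$ / $\mathit{nodes}(ct)$ are the sets of configurations labelling bud / node vertices of $ct$. For ground $t$: $\mathit{completed}(s,p,t)=\mathit{node}(s,p,\{\mathit{completed}(s',p.p',t)\mid(s',p')\in\delta(s,\mathrm{hd}(t|_{p.L(s)}))\})$ and $\mathit{completed}(t)=\mathit{completed}(s_0,\epsilon,t)$. $\mathit{grow}(ct,s,p,t)$: if $ct=\mathit{bud}(s,p)$ it is $\mathit{node}(s,p,\{\mathit{bud}(s',p.p')\mid(s',p')\in\delta(s,\mathrm{hd}(t|_{p.L(s)}))\})$; if $ct=\mathit{bud}(s',p')$ with $(s',p')\ne(s,p)$ it is $ct$; if $ct=\mathit{node}(s',p',cts)$ it is $\mathit{node}(s',p',\{\mathit{grow}(c,s,p,t)\mid c\in cts\})$. $\mathit{prune}(\mathit{bud}(s,p),q)=\mathit{bud}(s,p)$; $\mathit{prune}(\mathit{node}(s,p,cts),q)=\mathit{bud}(s,p)$ if $p.L(s)=q$ and $\mathit{node}(s,p,\{\mathit{prune}(c,q)\mid c\in cts\})$ otherwise. $ct[p]$ denotes the subtree of $ct$ whose root configuration $(s,q)$ satisfies $q.L(s)=p$. The fragment relation $\sqsubseteq$ is the smallest relation with $\mathit{bud}(s,p)\sqsubseteq\mathit{bud}(s,p)$, $\mathit{bud}(s,p)\sqsubseteq\mathit{node}(s,p,cts)$, and $\mathit{node}(s,p,cts)\sqsubseteq\mathit{node}(s,p,cts')$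 iff there is a bijection $\varphi:cts\to cts'$ with $c\sqsubseteq\varphi(c)$ for all $c\in cts$.
   Formalization: Part (v) holds only for configuration trees ct with $ct\sqsubseteq\mathit{completed}(t)$. The paper assumes this as well. *)

(* Defs.v *)
From HB Require Import structures.
From mathcomp Require Import all_boot finmap.
From Stdlib Require List Permutation.
Set Implicit Arguments. Unset Strict Implicit. Unset Printing Implicit Defensive.

Local Open Scope fset_scope.

Section Terms.
Variables (F : finType) (V : countType).

Inductive term := Var of V | App of F & seq term.

Fixpoint term_enc (t : term) : GenTree.tree (F + V) :=
  match t with
  | Var x => GenTree.Leaf (inr x)
  | App f ts => GenTree.Node 0 (GenTree.Leaf (inl f) :: map term_enc ts)
  end.

Fixpoint term_dec (g : GenTree.tree (F + V)) : option term :=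
  match g with
  | GenTree.Leaf (inr x) => Some (Var x)
  | GenTree.Node _ (GenTree.Leaf (inl f) :: gs) => Some (App f (pmap term_dec gs))
  | _ => None
  end.

Lemma term_encK : forall t, term_dec (term_enc t) = Some t.
Proof.
fix IH 1; case=> [x|f ts] //=; congr (Some (App f _)).
elim: ts => //= u us IHus; by rewrite IH /= IHus.
Qed.

HB.instance Definition _ := Countable.copy term (pcan_type term_encK).

(* Positions: finite lists of positive integers; [::] is epsilon,
   p ++ q is concatenation p.q. *)
Definition pos := seq nat.

Fixpoint subterm (t : term) (p : pos) : option term :=
  match p with
  | [::] => Some t
  | i :: q =>
      match t with
      | Var _ => None
      | App _ ts => if 0 < i then obind (subterm^~ q) (onth ts i.-1) else None
      end
  end.

Definition in_dom (t : term) (p : pos) : bool := subterm t p != None.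

(* t[u]_p (meaningful for p \in D(t)) *)
Fixpoint replace (t : term) (p : pos) (u : term) : term :=
  match p with
  | [::] => u
  | i :: q =>
      match t with
      | Var x => Var x
      | App f ts =>
          if (0 < i) && (i <= size ts)
          then App f (set_nth t ts i.-1 (replace (nth t ts i.-1) q u))
          else t
      end
  end.

Definition is_var (t : term) : bool := if t is Var _ then true else false.

Definition head_sym (t : term) : option F :=
  if t is App f _ then Some f else None.

Fixpoint vars (t : term) : seq V :=
  match t with Var x => [:: x] | App _ ts => flatten (map vars ts) end.

Fixpoint subst (sigma : V -> term) (t : term) : term :=
  match t with Var x => sigma x | App f ts => App f (map (subst sigma) ts) end.

Fixpoint tsize (t : term) : nat :=
  match t with Var _ => 1 | App _ ts => (sumn (map tsize ts)).+1 end.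

Variable ar : F -> nat.

Fixpoint wf_term (t : term) : bool :=
  match t with
  | Var _ => true
  | App f ts => (size ts == ar f) && all wf_term ts
  end.

Fixpoint no_vars (t : term) : bool :=
  match t with Var _ => false | App _ ts => all no_vars ts end.

Definition ground_term (t : term) : bool := wf_term t && no_vars t.

Definition rw_step (l r : term) (p : pos) (t t' : term) : Prop :=
  exists (u : term) (sigma : V -> term),
    [/\ in_dom u p, t = replace u p (subst sigma l) & t' = replace u p (subst sigma r)].

Definition trs_ok (R : seq (term * term)) : Prop :=
  R != [::] /\
  forall l r, (l, r) \in R ->
    [/\ ~~ is_var l, {subset vars r <= vars l}, wf_term l & wf_term r].

Definition mentry := (term * pos)%type.
Definition goal := ({fset mentry} * mentry)%type.        (* mo |-> l@p *)
Definition state := {fset goal}.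

Variable R : seq (term * term).

Definition Lhs : {fset term} := [fset rl.1 | rl in R].

Definition s0 : state := [fset ([fset (l, [::])], (l, [::])) | l in Lhs].

Definition pos_mo (mo : {fset mentry}) : {fset pos} := [fset e.2 | e in mo].

Definition reduce (mo : {fset mentry}) (f : F) (p : pos) : {fset mentry} :=
  [fset e in mo | e.2 != p] `|`
  [fset x | x in
     flatten [seq pmap (fun i => match subterm e.1 [:: i] with
                                 | Some u => if is_var u then None
                                             else Some (u, p ++ [:: i])
                                 | None => None end)
                       (iota 1 (ar f))
             | e <- mo & e.2 == p]].

Variable lab : state -> pos.

Definition fresh_goals (s : state) (f : F) : {fset goal} :=
  [fset x | x in
     flatten [seq [seq ([fset (l, lab s ++ [:: i])], (l, lab s ++ [:: i]))
                       | i <- iota 1 (ar f)] | l <- Lhs]].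

Definition deriv (s : state) (f : F) : {fset goal} :=
  [fset (reduce g.1 f (lab s), g.2) | g in s &
      has (fun e => (e.2 == lab s) && (head_sym e.1 == Some f)) g.1
      && (reduce g.1 f (lab s) != fset0)]
  `|` [fset g in s | lab s \notin pos_mo g.1]
  `|` fresh_goals s f.

Definition direct_dep (g h : goal) : bool := pos_mo g.1 `&` pos_mo h.1 != fset0.

(* dependency class of g in D: closure of {g} under direct dependency
   inside D (|D| iterations suffice) *)
Definition dep_class (D : {fset goal}) (g : goal) : {fset goal} :=
  iter #|` D| (fun X => X `|` [fset h in D | has (fun k => direct_dep k h) X])
       [fset g].

Definition dep_classes (D : {fset goal}) : {fset {fset goal}} :=
  [fset dep_class D g | g in D].

Fixpoint lcp (p q : pos) : pos :=
  match p, q with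
  | i :: p', j :: q' => if i == j then i :: lcp p' q' else [::]
  | _, _ => [::]
  end.

Definition gcp (K : {fset goal}) : pos :=
  match [seq g.2.2 | g <- K] with
  | [::] => [::]
  | x :: xs => foldl lcp x xs
  end.

Definition lift (K : {fset goal}) : state :=
  let n := size (gcp K) in
  [fset ([fset (e.1, drop n e.2) | e in g.1], (g.2.1, drop n g.2.2)) | g : goal in K].

Definition delta (s : state) (f : F) : {fset (state * pos)} :=
  [fset (lift K, gcp K) | K in dep_classes (deriv s f)].

Inductive reach : state -> Prop :=
| reach0 : reach s0
| reachS s f s' p' : reach s -> (s', p') \in delta s f -> reach s'.

Definition label_ok : Prop :=
  forall s, reach s -> exists2 g, g \in s & (g.2.2 == [::]) && (lab s \in pos_mo g.1).

Definition config := (state * pos)%type.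

(* children are a finite collection, represented by a list *)
Inductive ctree := Bud of state & pos | Node of state & pos & seq ctree.

Definition hd_at (t : term) (q : pos) : option F := obind head_sym (subterm t q).

Definition succs (t : term) (s : state) (p : pos) : seq config :=
  match hd_at t (p ++ lab s) with
  | Some f => [seq (c.1, p ++ c.2) | c <- delta s f]
  | None => [::]
  end.

Fixpoint completed_fuel (n : nat) (t : term) (s : state) (p : pos) : ctree :=
  match n with
  | 0 => Node s p [::]
  | n.+1 => Node s p [seq completed_fuel n t c.1 c.2 | c <- succs t s p]
  end.

(* completed(t) = completed(s0, eps, t); every branch reads pairwise distinct
   positions of t, so tsize t + 1 levels of recursion suffice. *)
Definition completed (t : term) : ctree := completed_fuel (tsize t).+1 t s0 [::].

Fixpoint grow (ct : ctree) (s : state) (p : pos) (t : term) : ctree :=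
  match ct with
  | Bud s' p' =>
      if (s', p') == (s, p)
      then Node s p [seq Bud c.1 c.2 | c <- succs t s p]
      else ct
  | Node s' p' cts => Node s' p' [seq grow c s p t | c <- cts]
  end.

Fixpoint prune (ct : ctree) (q : pos) : ctree :=
  match ct with
  | Bud s p => Bud s p
  | Node s p cts =>
      if p ++ lab s == q then Bud s p else Node s p [seq prune c q | c <- cts]
  end.

Fixpoint buds (ct : ctree) : seq config :=
  match ct with
  | Bud s p => [:: (s, p)]
  | Node _ _ cts => flatten [seq buds c | c <- cts]
  end.

Fixpoint nodes (ct : ctree) : seq config :=
  match ct with
  | Bud _ _ => [::]
  | Node s p cts => (s, p) :: flatten [seq nodes c | c <- cts]
  end.

(* fragment relation: bijection between children = permutation of the list *)
Inductive frag : ctree -> ctree -> Prop :=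
| frag_bb s p : frag (Bud s p) (Bud s p)
| frag_bn s p cts : frag (Bud s p) (Node s p cts)
| frag_nn s p cts cts' cts'' :
    Permutation.Permutation cts' cts'' -> List.Forall2 frag cts cts'' ->
    frag (Node s p cts) (Node s p cts').

Inductive subtree : ctree -> ctree -> Prop :=
| subtree_refl c : subtree c c
| subtree_child c s p cts d : List.In d cts -> subtree c d -> subtree c (Node s p cts).

Definition root_read (ct : ctree) : pos :=
  match ct with Bud s q | Node s q _ => q ++ lab s end.

Definition conf_ok (ct : ctree) : Prop :=
  forall c, c \in nodes ct ++ buds ct -> reach c.1.

End Terms.

(* Main.v *)
Require Import Defs.
From HB Require Import structures.
From mathcomp Require Import all_boot finmap zify.
From Stdlib Require List Permutation.
Set Implicit Arguments. Unset Strict Implicit. Unset Printing Implicit Defensive.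
Local Open Scope fset_scope.

Section Main.
Variables (F : finType) (V : countType) (ar : F -> nat)
  (R : seq (term F V * term F V)) (lab : state F V -> pos).

Notation ctree := (ctree F V).

Fixpoint ctree_ind' (P : ctree -> Prop) (HB : forall s p, P (Bud s p))
  (HN : forall s p cts, (forall c, List.In c cts -> P c) -> P (Node s p cts))
  (c : ctree) : P c :=
  match c with
  | Bud s p => HB s p
  | Node s p cts => HN s p cts
     ((fix go (l : seq ctree) : forall c, List.In c l -> P c :=
        match l with
        | [::] => fun c H => False_ind _ H
        | d :: l' => fun c H => match H with
                     | or_introl E => eq_ind d P (ctree_ind' HB HN d) c E
                     | or_intror H' => go l' c H' end
        end) cts)
  end.

Fixpoint frag_ind' (P : ctree -> ctree -> Prop)
  (Hbb : forall s p, P (Bud s p) (Bud s p))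
  (Hbn : forall s p cts, P (Bud s p) (Node s p cts))
  (Hnn : forall s p cts cts' cts'', Permutation.Permutation cts' cts'' ->
      List.Forall2 (@frag F V) cts cts'' -> List.Forall2 P cts cts'' ->
      P (Node s p cts) (Node s p cts'))
  c c' (H : frag c c') {struct H} : P c c' :=
  match H with
  | frag_bb s p => Hbb s p
  | frag_bn s p cts => Hbn s p cts
  | frag_nn s p cts cts' cts'' Hp HF => Hnn s p cts cts' cts'' Hp HF
      ((fix go l1 l2 (HF : List.Forall2 (@frag F V) l1 l2) : List.Forall2 P l1 l2 :=
         match HF with
         | List.Forall2_nil => List.Forall2_nil _
         | List.Forall2_cons x y l1 l2 Hxy HF' =>
             List.Forall2_cons x y (frag_ind' Hbb Hbn Hnn Hxy) (go _ _ HF')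
         end) cts cts'' HF)
  end.

Lemma Forall2_map_l (A B : Type) (P Q : A -> B -> Prop) (f : A -> A) l1 l2 :
  List.Forall2 P l1 l2 -> (forall x y, List.In y l2 -> P x y -> Q (f x) y) ->
  List.Forall2 Q (map f l1) l2.
Proof.
elim=> [|x y l l' Pxy HF IH] H /=; constructor.
- by apply: H => //; left.
- by apply: IH => a b Hb; apply: H; right.
Qed.

Lemma Forall2_map2 (A : Type) (P Q : A -> A -> Prop) (f : A -> A) l1 l2 :
  List.Forall2 P l1 l2 -> (forall x y, P x y -> Q (f x) (f y)) ->
  List.Forall2 Q (map f l1) (map f l2).
Proof. by elim=> [|x y l l' Pxy HF IH] H /=; constructor; auto. Qed.

Lemma Forall2_refl_map (A : Type) (Q : A -> A -> Prop) (f : A -> A) l :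
  (forall x, List.In x l -> Q (f x) x) -> List.Forall2 Q (map f l) l.
Proof.
elim: l => [|x l IH] H /=; constructor.
- by apply: H; left.
- by apply: IH => y Hy; apply: H; right.
Qed.

Lemma prune_frag ct p : frag (prune lab ct p) ct.
Proof.
elim/ctree_ind': ct => [s q|s q cts IH] /=; first by constructor.
case: ifP => _; first by constructor.
apply: (@frag_nn _ _ s q _ _ cts); first by apply: Permutation.Permutation_refl.
exact: Forall2_refl_map.
Qed.

Lemma prune_mono ct ct' p : frag ct ct' -> frag (prune lab ct p) (prune lab ct' p).
Proof.
elim/frag_ind' => [s q|s q cts|s q cts cts' cts'' Hp HF IH] /=.
- by constructor.
- by case: ifP => _; constructor.
- case: ifP => _; first by constructor.
  apply: (@frag_nn _ _ s q _ _ (map (prune lab ^~ p) cts'')).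
    exact: Permutation.Permutation_map.
  by apply: Forall2_map2 IH _ => x y.
Qed.

End Main.

Section S.
Variables (F : finType) (V : countType) (ar : F -> nat)
  (R : seq (term F V * term F V)) (lab : state F V -> pos).

Notation goal := (goal F V).
Notation state := (state F V).

Definition pre (a b : pos) := exists w, b = a ++ w.
Lemma pre_refl a : pre a a. Proof. by exists [::]; rewrite cats0. Qed.
Lemma pre_cat a w : pre a (a ++ w). Proof. by exists w. Qed.
Lemma pre_trans a b c : pre a b -> pre b c -> pre a c.
Proof. by move=> [w1 ->] [w2 ->]; exists (w1 ++ w2); rewrite catA. Qed.
Lemma pre_app2 c a b : pre (c ++ a) (c ++ b) <-> pre a b.
Proof.
split=> [[w]|[w ->]]; last by exists w; rewrite catA.
by rewrite -catA => /eqP; rewrite eqseq_cat // => /andP[_ /eqP ->]; exists w.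
Qed.
Lemma pre_drop g a : pre g a -> a = g ++ drop (size g) a.
Proof. by move=> [w ->]; rewrite drop_size_cat. Qed.

Lemma pre_size a b : pre a b -> size a <= size b.
Proof. by move=> [w ->]; rewrite size_cat leq_addr. Qed.
Lemma pre_eq a b : pre a b -> size b <= size a -> a = b.
Proof.
move=> [w ->]; rewrite size_cat -{2}(addn0 (size a)) leq_add2l leqn0 size_eq0.
by move/eqP->; rewrite cats0.
Qed.
Lemma pre_comp a b x : pre a x -> pre b x -> pre a b \/ pre b a.
Proof.
move=> [w1 E1] [w2 E2].
case: (leqP (size a) (size b)) => H.
- left; exists (take (size b - size a) w1).
  have: take (size b) x = b by rewrite E2 take_size_cat.
  by rewrite E1 take_cat ltnNge H /= => ->.
- right; exists (take (size a - size b) w2).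
  have: take (size a) x = a by rewrite E1 take_size_cat.
  by rewrite E2 take_cat ltnNge (ltnW H) /= => ->.
Qed.
Lemma pre_snoc a b i : pre a (b ++ [:: i]) -> a = b ++ [:: i] \/ pre a b.
Proof.
move=> [w E]; case/lastP: w E => [|w j]; first by rewrite cats0; left.
rewrite -cats1 catA => E.
have Hs : size b = size (a ++ w).
  by move: (congr1 size E); rewrite !size_cat /= !addn1 => -[].
move/eqP: E; rewrite eqseq_cat //.
by case/andP=> /eqP -> _; right; exists w.
Qed.
Lemma pre_nil a : pre a [::] -> a = [::].
Proof. by case=> w; case: a. Qed.
Lemma reduce_mem mo f L (e : mentry F V) : e \in reduce ar mo f L ->
  (e \in mo /\ e.2 != L) \/
  (exists i, e.2 = L ++ [:: i] /\ exists2 e0, e0 \in mo & e0.2 = L).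
Proof.
rewrite /reduce in_fsetU => /orP[|].
  by rewrite !inE => /andP[H1 H2]; left.
rewrite in_fset => /flattenP[l /mapP[e0]]; rewrite mem_filter => /andP[/eqP E0 He0] ->.
rewrite mem_pmap => /mapP[i _].
case: (subterm e0.1 [:: i]) => [u|] //; case: (is_var u) => //; case=> -> /=.
by right; exists i; split=> //; exists e0.
Qed.

Lemma pos_moP (mo : {fset mentry F V}) o :
  reflect (exists2 e, e \in mo & o = e.2) (o \in pos_mo mo).
Proof. exact: imfsetP. Qed.

Definition inobl (s : state) o := exists2 h, h \in s & o \in pos_mo h.1.

Lemma deriv_cases s f h : h \in deriv ar R lab s f ->
  (exists2 g, g \in s & h = (reduce ar g.1 f (lab s), g.2) /\ lab s \in pos_mo g.1) \/
  (h \in s /\ lab s \notin pos_mo h.1) \/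
  (exists l i, h = ([fset (l, lab s ++ [:: i])], (l, lab s ++ [:: i]))).
Proof.
rewrite /deriv !in_fsetU => /orP[/orP[|]|].
- case/imfsetP=> g /=; rewrite inE => /andP[Hg /andP[Hhas _]] ->.
  left; exists g => //; split=> //.
  case/hasP: Hhas => e He /andP[/eqP <- _]; apply/pos_moP; by exists e.
- by rewrite inE => /andP[H1 H2]; right; left.
- rewrite /fresh_goals in_fset => /allpairsP[[l i] /= [_ _ ->]].
  by right; right; exists l, i.
Qed.

Lemma deriv_obl s f h o : h \in deriv ar R lab s f -> o \in pos_mo h.1 ->
  (inobl s o /\ o <> lab s) \/ exists i, o = lab s ++ [:: i].
Proof.
case/deriv_cases => [[g Hg [-> _]]|[[Hh HL]|[l [i ->]]]] /=.
- case/pos_moP => e /reduce_mem [[He Hne]|[i [Ei _]]] ->.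
    left; split; last by apply/eqP.
    by exists g => //; apply/pos_moP; exists e.
  by right; exists i.
- move=> Ho; left; split; first by exists h.
  by move=> E; move: HL; rewrite -E Ho.
- by case/pos_moP=> e; rewrite inE => /eqP -> ->; right; exists i.
Qed.

Definition I1 (s : state) := forall h, h \in s -> forall o, o \in pos_mo h.1 -> pre h.2.2 o.

Lemma deriv_I1 s f : I1 s -> I1 (deriv ar R lab s f).
Proof.
move=> H1 h /deriv_cases [[g Hg [-> _]]|[[Hh _]|[l [i ->]]]] o /=.
- case/pos_moP => e /reduce_mem [[He _]|[i [Ei [e0 He0 E0]]]] ->.
    by apply: H1 => //; apply/pos_moP; exists e.
  rewrite Ei; apply: (pre_trans (b := lab s)); last exact: pre_cat.
  by apply: H1 => //; apply/pos_moP; exists e0.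
- exact: H1.
- by case/pos_moP=> e; rewrite inE => /eqP -> ->; apply: pre_refl.
Qed.

Lemma pre_nil_l a : pre [::] a. Proof. by exists a. Qed.
Lemma pre_cons i a b : pre a b -> pre (i :: a) (i :: b).
Proof. by case=> w ->; exists w. Qed.

Lemma lcp_pre p q : pre (lcp p q) p /\ pre (lcp p q) q.
Proof.
elim: p q => [|i p IH] [|j q] /=; try by split; apply: pre_nil_l.
case: (i =P j) => [<-|_]; last by split; apply: pre_nil_l.
by case: (IH q) => H1 H2; split; apply: pre_cons.
Qed.

Lemma foldl_lcp_pre xs x : pre (foldl lcp x xs) x /\ forall y, y \in xs -> pre (foldl lcp x xs) y.
Proof.
elim: xs x => [|y ys IH] x /=; first by split=> //; apply: pre_refl.
case: (IH (lcp x y)) => H1 H2; case: (lcp_pre x y) => H3 H4; split.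
  exact: pre_trans H1 H3.
move=> z; rewrite in_cons => /orP[/eqP ->|Hz]; first exact: pre_trans H1 H4.
exact: H2.
Qed.

Lemma gcp_pre (K : {fset goal}) h : h \in K -> pre (gcp K) h.2.2.
Proof.
rewrite /gcp => Hh; have : h.2.2 \in [seq g.2.2 | g <- K] by apply: map_f.
case: [seq g.2.2 | g <- K] => [|x xs] //.
rewrite in_cons => /orP[/eqP ->|]; first by case: (foldl_lcp_pre xs x).
by case: (foldl_lcp_pre xs x) => _; apply.
Qed.

Lemma lift_cases (K : {fset goal}) h' o' : h' \in Defs.lift K -> o' \in pos_mo h'.1 ->
  exists2 g, g \in K & exists2 e, e \in g.1 &
    h'.2.2 = drop (size (gcp K)) g.2.2 /\ o' = drop (size (gcp K)) e.2.
Proof.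
case/imfsetP=> g /= Hg -> /pos_moP [e'] /imfsetP [e /= He ->] ->.
by exists g => //; exists e.
Qed.

Lemma lift_obl (K : {fset goal}) h' o' : I1 K -> h' \in Defs.lift K -> o' \in pos_mo h'.1 ->
  exists2 h, h \in K & gcp K ++ o' \in pos_mo h.1.
Proof.
move=> H1 Hh' Ho'; case: (lift_cases Hh' Ho') => g Hg [e He [_ ->]].
exists g => //; rewrite -pre_drop; first by apply/pos_moP; exists e.
apply: pre_trans (gcp_pre Hg) _; apply: H1 => //; apply/pos_moP; by exists e.
Qed.

Lemma lift_I1 (K : {fset goal}) : I1 K -> I1 (Defs.lift K).
Proof.
move=> H1 h' Hh' o' Ho'; case: (lift_cases Hh' Ho') => g Hg [e He [-> ->]].
have Hge : pre g.2.2 e.2 by apply: H1 => //; apply/pos_moP; exists e.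
have Hg0 := gcp_pre Hg.
have E2 := pre_drop (pre_trans Hg0 Hge); have E1 := pre_drop Hg0.
by apply/(pre_app2 (gcp K)); rewrite -E1 -E2.
Qed.

End S.

Section Main.
Variables (F : finType) (V : countType) (ar : F -> nat)
  (R : seq (term F V * term F V)) (lab : state F V -> pos).

Notation term := (term F V).

Fixpoint dl (g : term -> seq pos) (i : nat) (ts : seq term) : seq pos :=
  match ts with [::] => [::] | u :: us => map (cons i) (g u) ++ dl g i.+1 us end.
Fixpoint dpos (t : term) : seq pos :=
  match t with Var _ => [:: [::]] | App _ ts => [::] :: dl dpos 1 ts end.

Fixpoint term_ind' (P : term -> Prop) (HV : forall x, P (Var F x))
  (HA : forall f ts, (forall u, List.In u ts -> P u) -> P (App f ts)) t : P t :=
  match t with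
  | Var x => HV x
  | App f ts => HA f ts
     ((fix go (l : seq term) : forall c, List.In c l -> P c :=
        match l with
        | [::] => fun c H => False_ind _ H
        | d :: l' => fun c H => match H with
                     | or_introl E => eq_ind d P (term_ind' HV HA d) c E
                     | or_intror H' => go l' c H' end
        end) ts)
  end.

Lemma size_dpos t : size (dpos t) = Defs.tsize t.
Proof.
elim/term_ind': t => [x|f ts IH] //=; congr S.
elim: ts 1 IH => [|u us IHus] i IH //=.
rewrite size_cat size_map IH; last by left.
by rewrite IHus // => v Hv; apply: IH; right.
Qed.

Lemma dl_mem g i ts k u b : onth ts k = Some u -> b \in g u -> (i + k)%N :: b \in dl g i ts.
Proof.
elim: ts i k => [|v vs IH] i [|k] //=.
- by case=> -> Hb; rewrite addn0 mem_cat (map_f (cons i)).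
- by move=> Hk Hb; rewrite mem_cat addnS -addSn IH ?orbT.
Qed.

Lemma subterm_dpos a t w : subterm t a = Some w -> a \in dpos t.
Proof.
elim: a t => [|j a IH] [x|f ts] //=; try by rewrite mem_head.
case: j => [|j] //=; case E: (onth ts j) => [u|] //= Hs.
by rewrite in_cons (dl_mem 1 E (IH _ Hs)) orbT.
Qed.

Lemma dom_bound (t : term) (A : seq pos) : uniq A -> (forall a, a \in A -> hd_at t a != None) ->
  size A <= Defs.tsize t.
Proof.
move=> uA HA; rewrite -size_dpos; apply: uniq_leq_size => // a /HA.
rewrite /hd_at; case E: (subterm t a) => [w|] // _; exact: subterm_dpos E.
Qed.

Lemma onth_set_nth (T : Type) x0 (s : seq T) i y j : i < size s ->
  onth (set_nth x0 s i y) j = if j == i then Some y else onth s j.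
Proof.
elim: s i j => [|z s IH] [|i] [|j] //= Hi; exact: IH.
Qed.

Lemma hd_replace (u : term) p v x : in_dom u p -> ~ pre p x -> hd_at (replace u p v) x = hd_at u x.
Proof.
elim: p u x => [|i p IH] u x Hd Hnp; first by case: Hnp; exists x.
case: u Hd => [y|f ts]; first by rewrite /in_dom.
rewrite /in_dom /=; case: i Hnp => [|i] Hnp //=.
case E: (onth ts i) => [w|] //= Hdw.
have Hi : i < size ts by rewrite -onthTE E.
rewrite Hi /=.
case: x Hnp => [|j x] Hnp //.
rewrite /hd_at /=; case: j Hnp => [|j] Hnp //=.
rewrite onth_set_nth //; case: (j =P i) => [Eji|_] //; subst j.
rewrite E /= (@onth_nth _ (App f ts) w ts i E).
have H := IH w x Hdw; rewrite /hd_at in H; rewrite H //.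
by move=> Hp; apply: Hnp; case: Hp => z ->; exists z.
Qed.

End Main.

Section S.
Variables (F : finType) (V : countType) (ar : F -> nat)
  (R : seq (term F V * term F V)) (lab : state F V -> pos).

Notation goal := (goal F V).
Notation state := (state F V).

Definition Phi (D X : {fset goal}) := X `|` [fset h in D | has (fun k => direct_dep k h) X].

Lemma Phi_sub D X : X `<=` D -> Phi D X `<=` D.
Proof.
move=> H; apply/fsubsetP => h; rewrite in_fsetU => /orP[/(fsubsetP H)//|].
by rewrite inE => /andP[].
Qed.
Lemma Phi_ext D X : X `<=` Phi D X. Proof. exact: fsubsetUl. Qed.

Lemma iter_sub (D : {fset goal}) x j : x \in D -> iter j (Phi D) [fset x] `<=` D.
Proof.
move=> Hx; elim: j => [|j IH] /=; last exact: Phi_sub.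
by apply/fsubsetP => y; rewrite in_fset1 => /eqP ->.
Qed.

Lemma dep_sub (D : {fset goal}) x : x \in D -> dep_class D x `<=` D.
Proof. exact: iter_sub. Qed.

Lemma dep_self (D : {fset goal}) x : x \in dep_class D x.
Proof.
rewrite /dep_class; elim: #|`D| => [|j IH] /=; first by rewrite in_fset1.
exact: (fsubsetP (Phi_ext _ _)).
Qed.

Lemma iter_fix (D : {fset goal}) x j : x \in D ->
  Phi D (iter j (Phi D) [fset x]) = iter j (Phi D) [fset x] \/ j < #|` iter j (Phi D) [fset x]|.
Proof.
move=> Hx; elim: j => [|j IH]; first by right; rewrite /= cardfs1.
rewrite iterS; set X := iter j _ _.
case: (Phi D X =P X) => [E|Hne]; first by left; rewrite E E.
case: IH => [E|Hlt]; first by case: Hne.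
right; apply: leq_ltn_trans Hlt _; apply: fproper_ltn_card.
by rewrite fproperEneq Phi_ext andbT eq_sym; apply/eqP.
Qed.

Lemma dep_fix (D : {fset goal}) x : x \in D -> Phi D (dep_class D x) = dep_class D x.
Proof.
move=> Hx; case: (iter_fix #|`D| Hx) => // H; exfalso.
have := fsubset_leq_card (iter_sub #|`D| Hx); rewrite leqNgt.
by rewrite H.
Qed.

Lemma dep_closed (D : {fset goal}) x h k : x \in D -> h \in dep_class D x -> k \in D ->
  direct_dep h k -> k \in dep_class D x.
Proof.
move=> Hx Hh Hk Hd; rewrite -(dep_fix Hx) in_fsetU; apply/orP; right.
rewrite !inE /=; apply/andP; split; first exact: Hk.
apply/hasP; by exists h.
Qed.

Lemma dep_min (D : {fset goal}) x (Y : {fset goal}) : x \in Y ->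
  (forall h k, h \in Y -> k \in D -> direct_dep h k -> k \in Y) -> dep_class D x `<=` Y.
Proof.
move=> Hx HY; rewrite /dep_class; elim: #|`D| => [|j IH] /=.
  by apply/fsubsetP => y; rewrite in_fset1 => /eqP ->.
apply/fsubsetP => k; rewrite in_fsetU => /orP[/(fsubsetP IH)//|].
rewrite inE => /andP[Hk /hasP[h Hh Hd]].
exact: (HY h k (fsubsetP IH h Hh) Hk Hd).
Qed.

Lemma dd_sym (g h : goal) : direct_dep g h = direct_dep h g.
Proof. by rewrite /direct_dep fsetIC. Qed.

Lemma dep_common (D : {fset goal}) x1 x2 h : x1 \in D -> x2 \in D -> h \in dep_class D x1 ->
  h \in dep_class D x2 -> dep_class D x1 `<=` dep_class D x2.
Proof.
move=> Hx1 Hx2 H1 H2.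
have Hin : x1 \in dep_class D x2.
  apply/negPn/negP => Hn.
  have Hsub : dep_class D x1 `<=` D `\` dep_class D x2.
    apply: dep_min; first by rewrite in_fsetD Hn.
    move=> h0 k; rewrite in_fsetD => /andP[Hh0 Hh0D] Hk Hd.
    rewrite in_fsetD Hk andbT; apply/negP => Hk2; move/negP: Hh0; apply.
    by apply: dep_closed Hk2 Hh0D _ => //; rewrite dd_sym.
  by move: (fsubsetP Hsub h H1); rewrite in_fsetD H2.
apply: dep_min Hin _ => h0 k Hh0 Hk Hd; exact: dep_closed Hh0 Hk Hd.
Qed.

Lemma dep_eq (D : {fset goal}) x1 x2 h1 h2 : x1 \in D -> x2 \in D -> h1 \in dep_class D x1 ->
  h2 \in dep_class D x2 -> direct_dep h1 h2 -> dep_class D x1 = dep_class D x2.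
Proof.
move=> Hx1 Hx2 H1 H2 Hd.
have H2D : h2 \in D by apply: (fsubsetP (dep_sub Hx2)).
have H21 : h2 \in dep_class D x1 by apply: dep_closed H1 H2D Hd.
apply/eqP; rewrite eqEfsubset; apply/andP; split.
  exact: dep_common H21 H2.
exact: dep_common H2 H21.
Qed.

Lemma delta_cases s f s' g : (s', g) \in delta ar R lab s f ->
  exists2 x, x \in deriv ar R lab s f &
    s' = Defs.lift (dep_class (deriv ar R lab s f) x) /\ g = gcp (dep_class (deriv ar R lab s f) x).
Proof.
case/imfsetP => K /imfsetP [x Hx ->] [-> ->]; by exists x.
Qed.

Lemma reach_I1 s : reach ar R lab s -> I1 s.
Proof.
elim => [|s1 f s' p' Hs IH Hd].
  move=> h /imfsetP [l _ ->] o /pos_moP [e]; rewrite in_fset1 => /eqP -> -> /=.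
  exact: pre_refl.
case: (delta_cases Hd) => x Hx [-> _]; apply: lift_I1 => h Hh.
apply: (deriv_I1 (f:=f) IH); exact: (fsubsetP (dep_sub Hx)).
Qed.

Lemma child_class s f s' g o' : reach ar R lab s -> (s', g) \in delta ar R lab s f ->
  inobl s' o' -> exists x h, [/\ x \in deriv ar R lab s f,
     h \in dep_class (deriv ar R lab s f) x,
     s' = Defs.lift (dep_class (deriv ar R lab s f) x),
     g = gcp (dep_class (deriv ar R lab s f) x) & g ++ o' \in pos_mo h.1].
Proof.
move=> Hs Hd [h' Hh' Ho']; case: (delta_cases Hd) => x Hx [Es Eg].
have HK : I1 (dep_class (deriv ar R lab s f) x).
  move=> h Hh; apply: (deriv_I1 (f:=f) (reach_I1 Hs)).
  exact: (fsubsetP (dep_sub Hx)).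
rewrite Es in Hh'; case: (lift_obl HK Hh' Ho') => h Hh Ho.
by exists x, h; split=> //; rewrite Eg.
Qed.

Definition Cobl (s : state) o := (inobl s o /\ o <> lab s) \/ exists i, o = lab s ++ [:: i].

Lemma child_obl s f s' g o' : reach ar R lab s -> (s', g) \in delta ar R lab s f ->
  inobl s' o' -> Cobl s (g ++ o').
Proof.
move=> Hs Hd Ho; case: (child_class Hs Hd Ho) => x [h [Hx Hh _ _ Ho2]].
exact: (deriv_obl (fsubsetP (dep_sub Hx) _ Hh) Ho2).
Qed.

Definition I3 (s : state) := forall o1 o2, inobl s o1 -> inobl s o2 -> pre o1 o2 -> o1 = o2.

Lemma anti s o1 o2 : I3 s -> inobl s (lab s) -> Cobl s o1 -> Cobl s o2 -> pre o1 o2 -> o1 = o2.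
Proof.
move=> H3 HL [[H1 N1]|[i ->]] [[H2 N2]|[j ->]] Hp.
- exact: H3.
- case: (pre_snoc Hp) => // Hp'; by case: N1; apply: H3.
- case: N2; symmetry; apply: H3 => //; exact: pre_trans (pre_cat _ _) Hp.
- by apply: pre_eq Hp _; rewrite !size_cat.
Qed.

Hypothesis HL : label_ok ar R lab.

Lemma lab_obl s : reach ar R lab s -> inobl s (lab s).
Proof. by move/HL => [g Hg /andP[_ H]]; exists g. Qed.

Lemma reach_I3 s : reach ar R lab s -> I3 s.
Proof.
elim => [|s1 f s' p' Hs IH Hd].
  move=> o1 o2 [h1 /imfsetP [l1 _ ->] /pos_moP [e1]]; rewrite in_fset1 => /eqP -> -> /=.
  move=> [h2 /imfsetP [l2 _ ->] /pos_moP [e2]]; rewrite in_fset1 => /eqP -> -> /=.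
  by [].
move=> o1 o2 Ho1 Ho2 Hp.
have := anti IH (lab_obl Hs) (child_obl Hs Hd Ho1) (child_obl Hs Hd Ho2).
rewrite pre_app2 => /(_ Hp).
by move/(congr1 (drop (size p'))); rewrite !drop_size_cat.
Qed.

End S.

Section S.
Variables (F : finType) (V : countType) (ar : F -> nat)
  (R : seq (term F V * term F V)) (lab : state F V -> pos).
Hypothesis HL : label_ok ar R lab.

Notation goal := (goal F V).
Notation state := (state F V).
Notation ctree := (ctree F V).
Notation term := (term F V).
Notation cf := (completed_fuel ar R lab).

Lemma In_mem (T : eqType) (x : T) l : List.In x l -> x \in l.
Proof. elim: l => //= y l IH [->|/IH H]; rewrite in_cons ?eqxx // H orbT //. Qed.

Lemma cf_eq n t s q : cf n t s q =
  Node s q (if n is m.+1 then map (fun c => cf m t c.1 c.2) (succs ar R lab t s q) else [::]).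
Proof. by case: n. Qed.

Lemma succs_mem t s q c : c \in succs ar R lab t s q ->
  exists f g, [/\ hd_at t (q ++ lab s) = Some f, (c.1, g) \in delta ar R lab s f & c.2 = q ++ g].
Proof.
rewrite /succs; case: (hd_at t (q ++ lab s)) => [f|] //.
by case/mapP => [[s' g]] Hd ->; exists f, g.
Qed.

Definition Good (A : seq pos) (s : state) q :=
  forall o a, inobl s o -> a \in A -> ~ pre (q ++ o) a.

Lemma read_notin A s q : reach ar R lab s -> Good A s q -> q ++ lab s \notin A.
Proof. move=> Hs HG; apply/negP => H; exact: (HG _ _ (lab_obl HL Hs) H (pre_refl _)). Qed.

Lemma Good_step A s q f s' g : reach ar R lab s -> Good A s q ->
  (s', g) \in delta ar R lab s f -> Good ((q ++ lab s) :: A) s' (q ++ g).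
Proof.
move=> Hs HG Hd o' a Ho' Ha; rewrite -catA.
have HC := child_obl Hs Hd Ho'; have H3 := reach_I3 HL Hs; have HLs := lab_obl HL Hs.
move: HC; set o := g ++ o' => HC.
rewrite in_cons in Ha; case/orP: Ha => [/eqP ->|Ha].
  rewrite pre_app2 => Hp.
  case: HC => [[H1 N1]|[i Ei]]; first by apply: N1; apply: H3.
  by move: (pre_size Hp); rewrite Ei size_cat addn1 ltnn.
case: HC => [[H1 N1]|[i ->]]; first exact: HG.
move=> Hp; apply: (HG _ _ HLs Ha); apply: pre_trans Hp; rewrite catA; exact: pre_cat.
Qed.

Lemma fuel_pos t n A s q : reach ar R lab s -> Good A s q -> uniq A ->
  (forall a, a \in A -> hd_at t a != None) -> Defs.tsize t < n + size A ->
  succs ar R lab t s q != [::] -> 1 < n.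
Proof.
move=> Hs HG uA HA Hn; rewrite /succs; case E: (hd_at t (q ++ lab s)) => [f|] // _.
have : size ((q ++ lab s) :: A) <= Defs.tsize t.
  apply: dom_bound; first by rewrite /= (read_notin Hs HG).
  by move=> a; rewrite in_cons => /orP[/eqP ->|/HA //]; rewrite E.
move=> /= H; have H2 := leq_ltn_trans H Hn; clear -H2; move: H2; rewrite -/(size A); move: (size A) => k; lia.
Qed.

Lemma frag_bud_inv s q (c : ctree) : frag (Bud s q) c -> c = Bud s q \/ exists cts, c = Node s q cts.
Proof. by move=> H; inversion H; subst; [left|right; eexists]. Qed.

Lemma frag_node_inv s q cts c : frag (Node s q cts) c ->
  exists cts' cts'', [/\ c = Node s q cts', Permutation.Permutation cts' cts'' &
     List.Forall2 (@frag F V) cts cts''].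
Proof. by move=> H; inversion H; subst; do 2 eexists; split; eauto. Qed.

Lemma Forall2_Bud (l : seq (config F V)) m t :
  List.Forall2 (@frag F V) (map (fun c => Bud c.1 c.2) l) (map (fun c => cf m t c.1 c.2) l).
Proof.
elim: l => [|c l IH] /=; constructor => //.
rewrite cf_eq; exact: frag_bn.
Qed.

Lemma grow_ok t s0 q0 n : forall ct s q A, reach ar R lab s -> Good A s q -> uniq A ->
  (forall a, a \in A -> hd_at t a != None) -> Defs.tsize t < n + size A ->
  frag ct (cf n t s q) -> frag (grow ar R lab ct s0 q0 t) (cf n t s q).
Proof.
elim: n => [|m IH] [s1 q1|s1 q1 cts] s q A Hs HG uA HA Hn Hf.
- case: (frag_bud_inv Hf) => [|[cts E]]; first by rewrite cf_eq.
  move: E; rewrite cf_eq => -[Es Eq _]; subst s1 q1 => /=.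
  case: eqP => [[Es Eq]|_] //; subst s0 q0.
  case E: (succs ar R lab t s q) => [|c l] /=.
    by apply: (@frag_nn _ _ s q [::] [::] [::]); constructor.
  have := fuel_pos Hs HG uA HA Hn; rewrite E => /(_ isT).
  by [].
- case: (frag_node_inv Hf) => cts' [cts'' [E Hp HF]].
  move: E Hp; rewrite cf_eq => -[Es Eq Ec] Hp; subst s1 q1 cts'.
  have E := Permutation.Permutation_nil Hp.
  subst cts''.
  by inversion HF; subst; apply: (@frag_nn _ _ s q [::] [::] [::]); constructor.
- case: (frag_bud_inv Hf) => [|[cts E]]; first by rewrite cf_eq.
  move: E; rewrite cf_eq => -[Es Eq _]; subst s1 q1 => /=.
  case: eqP => [[Es Eq]|_] //; subst s0 q0.
  apply: (@frag_nn _ _ s q _ _ (map (fun c => cf m t c.1 c.2) (succs ar R lab t s q))).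
    exact: Permutation.Permutation_refl.
  exact: Forall2_Bud.
- case: (frag_node_inv Hf) => cts' [cts'' [E Hp HF]].
  move: E Hp; rewrite cf_eq => -[Es Eq Ec] Hp; subst s1 q1 cts' => /=.
  apply: (@frag_nn _ _ s q _ _ cts'') => //.
  apply: Forall2_map_l HF _ => x y Hy Hxy.
  have := Permutation.Permutation_in _ (Permutation.Permutation_sym Hp) Hy.
  case/List.in_map_iff => c [Ey /In_mem Hc]; subst y.
  case: (succs_mem Hc) => f [g [Ehd Hd Ec]].
  have Hs' : reach ar R lab c.1 := reachS Hs Hd.
  apply: (IH _ _ _ ((q ++ lab s) :: A)) => //.
  + rewrite Ec; exact: (Good_step Hs HG Hd).
  + by rewrite /= (read_notin Hs HG).
  + by move=> a; rewrite in_cons => /orP[/eqP ->|/HA //]; rewrite Ehd.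
  + by rewrite /= addnS -addSn.
Qed.

End S.

Section S.
Variables (F : finType) (V : countType) (ar : F -> nat)
  (R : seq (term F V * term F V)) (lab : state F V -> pos).
Hypothesis HL : label_ok ar R lab.

Notation goal := (goal F V).
Notation state := (state F V).
Notation ctree := (ctree F V).
Notation term := (term F V).
Notation cf := (completed_fuel ar R lab).

Definition J p (s : state) q := forall o, inobl s o -> pre p (q ++ o) -> q ++ o = p.

Lemma J_step p s q f s' g : reach ar R lab s -> J p s q -> q ++ lab s != p ->
  (s', g) \in delta ar R lab s f -> J p s' (q ++ g).
Proof.
move=> Hs HJ Hne Hd o' Ho'; rewrite -catA.
case: (child_obl Hs Hd Ho') => [[H1 _]|[i ->]]; first exact: HJ.
rewrite catA => /pre_snoc [->//|Hp].
by move: Hne; rewrite (HJ _ (lab_obl HL Hs) Hp) eqxx.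
Qed.

Lemma prune_eq (t t' : term) p (Hh : forall x, ~ pre p x -> hd_at t x = hd_at t' x) n :
  forall n' s q A, reach ar R lab s -> Good A s q -> J p s q -> uniq A ->
  (forall a, a \in A -> hd_at t a != None) -> (forall a, a \in A -> hd_at t' a != None) ->
  Defs.tsize t < n + size A -> Defs.tsize t' < n' + size A ->
  prune lab (cf n t s q) p = prune lab (cf n' t' s q) p.
Proof.
elim: n => [|m IH] n' s q A Hs HG HJ uA HA HA' Hn Hn'; rewrite !cf_eq /=;
  case: ifP => // Hne.
- have Hnp : ~ pre p (q ++ lab s).
    by move=> H; move: Hne; rewrite (HJ _ (lab_obl HL Hs) H) eqxx.
  have ES : succs ar R lab t s q = succs ar R lab t' s q by rewrite /succs Hh.
  case E: (succs ar R lab t s q) => [|c l].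
    by case: n' Hn' => //= n' _; rewrite -ES E.
  by have := fuel_pos HL Hs HG uA HA Hn; rewrite E => /(_ isT).
- have Hnp : ~ pre p (q ++ lab s).
    by move=> H; move: Hne; rewrite (HJ _ (lab_obl HL Hs) H) eqxx.
  have ES : succs ar R lab t s q = succs ar R lab t' s q by rewrite /succs Hh.
  case E: (succs ar R lab t s q) => [|c l].
    by case: n' Hn' => //= n' _; rewrite -ES E.
  case: n' Hn' => [|m'] Hn'.
    by have := fuel_pos HL Hs HG uA HA' Hn'; rewrite -ES E => /(_ isT).
  rewrite -ES E -!map_comp; congr Node; apply/eq_in_map => c0; rewrite -E => Hc /=.
  case: (succs_mem Hc) => f [g [Ehd Hd Ec]].
  have Hs' : reach ar R lab c0.1 := reachS Hs Hd.
  have Hr : q ++ lab s \notin A := read_notin HL Hs HG.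
  apply: (IH _ _ _ ((q ++ lab s) :: A)) => //.
  + rewrite Ec; exact: (Good_step HL Hs HG Hd).
  + rewrite Ec; apply: (J_step Hs HJ _ Hd); by rewrite Hne.
  + by rewrite /= Hr.
  + by move=> a; rewrite in_cons => /orP[/eqP ->|/HA //]; rewrite Ehd.
  + by move=> a; rewrite in_cons => /orP[/eqP ->|/HA' //]; rewrite -Hh // Ehd.
  + by rewrite /= addnS -addSn.
  + by rewrite /= addnS -addSn.
Qed.

End S.

Section S.
Variables (F : finType) (V : countType) (ar : F -> nat)
  (R : seq (term F V * term F V)) (lab : state F V -> pos).
Hypothesis HL : label_ok ar R lab.

Notation goal := (goal F V).
Notation state := (state F V).
Notation ctree := (ctree F V).
Notation term := (term F V).
Notation cf := (completed_fuel ar R lab).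

Fixpoint Rd (ct : ctree) : seq pos :=
  match ct with
  | Bud s p => [:: p ++ lab s]
  | Node s p cts => (p ++ lab s) :: flatten (map Rd cts)
  end.

Lemma cobl_not_pre s o : reach ar R lab s -> Cobl lab s o -> ~ pre o (lab s).
Proof.
move=> Hs [[H1 N1]|[i ->]] Hp.
  by apply: N1; exact: (reach_I3 HL Hs H1 (lab_obl HL Hs) Hp).
by move: (pre_size Hp); rewrite size_cat addn1 ltnn.
Qed.

Lemma uniq_flat (T U : eqType) (G : T -> seq U) (l : seq T) : uniq l ->
  (forall c, c \in l -> uniq (G c)) ->
  (forall c1 c2 x, c1 \in l -> c2 \in l -> x \in G c1 -> x \in G c2 -> c1 = c2) ->
  uniq (flatten (map G l)).
Proof.
elim: l => [|c l IH] //= /andP[Hc Hl] HU HD.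
rewrite cat_uniq HU ?mem_head //= IH //; last first.
- by move=> c1 c2 x H1 H2; apply: HD; rewrite in_cons ?H1 ?H2 orbT.
- by move=> c1 H1; apply: HU; rewrite in_cons H1 orbT.
rewrite andbT; apply/hasPn => x /flattenP [l0 /mapP [c2 Hc2 ->] Hx]; apply/negP => Hx'.
have Hc2' : c2 \in c :: l by rewrite in_cons Hc2 orbT.
have E := HD c c2 x (mem_head _ _) Hc2' Hx' Hx.
by move: Hc; rewrite E Hc2.
Qed.

Lemma child_data t m s q c x : reach ar R lab s ->
  (forall s q, reach ar R lab s -> forall x, x \in Rd (cf m t s q) ->
     exists2 o, inobl s o & pre (q ++ o) x) ->
  c \in succs ar R lab t s q -> x \in Rd (cf m t c.1 c.2) ->
  exists f g o', [/\ hd_at t (q ++ lab s) = Some f, (c.1, g) \in delta ar R lab s f,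
     c.2 = q ++ g, inobl c.1 o' & pre (q ++ (g ++ o')) x].
Proof.
move=> Hs IH Hc Hx; case: (succs_mem Hc) => f [g [Ehd Hd Ec]].
case: (IH _ c.2 (reachS Hs Hd) _ Hx) => o' Ho' Hp.
by exists f, g, o'; split => //; rewrite catA -Ec.
Qed.

Lemma U t n : forall s q, reach ar R lab s ->
  uniq (Rd (cf n t s q)) /\
  forall x, x \in Rd (cf n t s q) -> exists2 o, inobl s o & pre (q ++ o) x.
Proof.
elim: n => [|m IH] s q Hs; rewrite cf_eq /=.
  split=> // x; rewrite inE => /eqP ->; exists (lab s); last exact: pre_refl.
  have HH := lab_obl HL Hs. exact HH.
have IH2 := fun s q H => (IH s q H).2.
have H3 := reach_I3 HL Hs; have HLs := lab_obl HL Hs.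
rewrite -map_comp.
split; last first.
  move=> x; rewrite in_cons => /orP[/eqP ->|]; first by exists (lab s) => //; apply: pre_refl.
  case/flattenP => l0 /mapP [c Hc ->] Hx.
  case: (child_data Hs IH2 Hc Hx) => f [g [o' [Ehd Hd Ec Ho' Hp]]].
  case: (child_obl Hs Hd Ho') => [[H1 _]|[i Ei]]; first by exists (g ++ o').
  exists (lab s) => //; apply: pre_trans Hp; rewrite Ei catA; exact: pre_cat.
apply/andP; split.
  apply/negP => /flattenP [l0 /mapP [c Hc ->] Hx].
  case: (child_data Hs IH2 Hc Hx) => f [g [o' [Ehd Hd Ec Ho' Hp]]].
  apply: (cobl_not_pre Hs (child_obl Hs Hd Ho')).
  by move/pre_app2: Hp.
apply: uniq_flat.
- rewrite /succs; case: (hd_at t (q ++ lab s)) => [f|] //.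
  rewrite map_inj_uniq ?fset_uniq // => [[a b] [c d]] /= [-> E].
  by move/(congr1 (drop (size q))): E; rewrite !drop_size_cat // => ->.
- move=> c Hc /=; case: (succs_mem Hc) => f [g [_ Hd _]].
  exact: (IH _ _ (reachS Hs Hd)).1.
move=> c1 c2 x Hc1 Hc2 Hx1 Hx2 /=.
case: (child_data Hs IH2 Hc1 Hx1) => f1 [g1 [o1 [Ehd1 Hd1 Ec1 Ho1 Hp1]]].
case: (child_data Hs IH2 Hc2 Hx2) => f2 [g2 [o2 [Ehd2 Hd2 Ec2 Ho2 Hp2]]].
move: Hd2; rewrite Ehd1 in Ehd2; case: Ehd2 => <- Hd2.
have C1 := child_obl Hs Hd1 Ho1; have C2 := child_obl Hs Hd2 Ho2.
have Eo : g1 ++ o1 = g2 ++ o2.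
  case: (pre_comp Hp1 Hp2) => /pre_app2 Hp.
    exact: anti H3 HLs C1 C2 Hp.
  by symmetry; apply: anti H3 HLs C2 C1 Hp.
case: (child_class Hs Hd1 Ho1) => y1 [h1 [Hy1 Hh1 Es1 Eg1 Ho1']].
case: (child_class Hs Hd2 Ho2) => y2 [h2 [Hy2 Hh2 Es2 Eg2 Ho2']].
have EK := dep_eq Hy1 Hy2 Hh1 Hh2.
have Hdd : direct_dep h1 h2.
  by apply/fset0Pn; exists (g1 ++ o1); rewrite in_fsetI Ho1' Eo Ho2'.
move: (EK Hdd) => EK'.
case: c1 c2 Es1 Eg1 Ec1 Es2 Eg2 Ec2 {Hc1 Hc2 Hx1 Hx2 Hd1 Hd2 Hp1 Hp2 Ho1 Ho2 C1 C2}
  => [s1 q1] [s2 q2] /= -> -> -> -> -> ->.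
by rewrite EK'.
Qed.

End S.

Section S.
Variables (F : finType) (V : countType) (lab : state F V -> pos).

Notation ctree := (ctree F V).
Notation Rd := (Rd lab).

Lemma count_flat_perm x (l1 l2 : seq ctree) : Permutation.Permutation l1 l2 ->
  count_mem x (flatten (map Rd l1)) = count_mem x (flatten (map Rd l2)).
Proof.
elim=> [|a l l' _ IH|a b l|l l' l'' _ IH1 _ IH2] //=.
- by rewrite !count_cat IH.
- by rewrite !count_cat addnCA.
- by rewrite IH1.
Qed.

Lemma frag_count c c' : frag c c' -> forall x, count_mem x (Rd c) <= count_mem x (Rd c').
Proof.
elim/frag_ind' => [s q|s q cts|s q cts cts' cts'' Hp HF IH] x /=.
- by [].
- by rewrite addn0 leq_addr.
- rewrite leq_add2l (count_flat_perm x Hp).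
  elim: IH {HF Hp} => [|a b l l' Hab _ IHl] //=.
  by rewrite !count_cat leq_add.
Qed.

Lemma uniq_from_count (T : eqType) (a b : seq T) : (forall x, count_mem x a <= count_mem x b) ->
  uniq b -> uniq a.
Proof.
move=> H Hb; apply: count_mem_uniq => x.
have := H x; rewrite (count_uniq_mem _ Hb).
case: (boolP (x \in a)) => Hx.
  have : 0 < count_mem x a by rewrite -has_count has_pred1.
  by case: (x \in b); case: (count_mem x a) => [|[]].
by move/count_memPn: Hx => ->.
Qed.

Lemma In_flat (T : eqType) (G : ctree -> seq T) (e : ctree) l : List.In e l ->
  {subset G e <= flatten (map G l)}.
Proof.
elim: l => [|d l IH] //= [->|He] y Hy; rewrite mem_cat ?Hy //.
by rewrite IH ?orbT.
Qed.

Lemma flat_In (T : eqType) (G : ctree -> seq T) l y : y \in flatten (map G l) ->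
  exists2 e, List.In e l & y \in G e.
Proof.
elim: l => [|d l IH] //=; rewrite mem_cat => /orP[Hy|/IH [e He Hy]].
  by exists d => //; left.
by exists e => //; right.
Qed.

Definition rdc (c : config F V) := c.2 ++ lab c.1.

Lemma nodes_Rd ct x : x \in nodes ct -> rdc x \in Rd ct.
Proof.
elim/ctree_ind': ct => [s q|s q cts IH] //=.
rewrite in_cons => /orP[/eqP ->|/flat_In [e He Hx]]; first by rewrite mem_head.
by rewrite in_cons (In_flat He (IH _ He Hx)) orbT.
Qed.

Lemma sub_Rd c d : subtree c d -> {subset Rd c <= Rd d}.
Proof.
elim=> [c0|c0 s q cts d0 Hin _ IH] // y Hy /=.
by rewrite in_cons (In_flat Hin (IH _ Hy)) orbT.
Qed.

Lemma root_Rd c : root_read lab c \in Rd c.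
Proof. by case: c => [s q|s q cts] /=; rewrite mem_head. Qed.

Lemma prune_id p (e : ctree) : p \notin Rd e -> prune lab e p = e.
Proof.
elim/ctree_ind': e => [s q|s q cts IH] //=.
rewrite in_cons negb_or => /andP[Hne Hn].
rewrite eq_sym (negbTE Hne); congr Node.
elim: cts IH Hn => [|d l IHl] //= IH Hn.
rewrite mem_cat negb_or in Hn; case/andP: Hn => Hd Hl.
rewrite IH ?IHl //; first by move=> e He; apply: IH; right.
by left.
Qed.

Lemma map_prune_id p (l : seq ctree) : p \notin flatten (map Rd l) ->
  map (prune lab ^~ p) l = l.
Proof.
elim: l => [|d l IH] //=; rewrite mem_cat negb_or => /andP[Hd Hl].
by rewrite prune_id // IH.
Qed.

Lemma pure_v ct c p : uniq (Rd ct) -> subtree c ct -> root_read lab c = p ->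
  forall x, (x \in nodes (prune lab ct p)) = (x \in nodes ct) && (x \notin nodes c).
Proof.
move=> U Hsub; elim: Hsub U => [c0|c0 s q cts d Hin Hsub IH] U Hr x.
  case: c0 Hr U => [s q|s q cts] /= Hr _; first by rewrite in_nil.
  by rewrite Hr eqxx /= in_nil; case: (x \in _).
have [l1 [l2 El]] := List.in_split _ _ Hin; subst cts.
move: U; rewrite /= map_cat flatten_cat /= !mem_cat !negb_or.
set A1 := flatten (map Rd l1); set A2 := flatten (map Rd l2).
move=> /andP[/and3P[Hr1 Hrd Hr2] U].
move: U; rewrite !cat_uniq => /and3P[U1 HA1 /and3P[Ud HdA2 U2]].
have pd : p \in Rd d by rewrite -Hr; apply: (sub_Rd Hsub); apply: root_Rd.
have dA1 : forall y, y \in Rd d -> y \notin A1.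
  by move=> y Hy; apply/negP => Hy1; move/hasPn: HA1 => /(_ y); rewrite mem_cat Hy Hy1 => /(_ isT).
have dA2 : forall y, y \in Rd d -> y \notin A2.
  by move=> y Hy; apply/negP => Hy2; move/hasPn: HdA2 => /(_ y Hy2); rewrite Hy.
have Hrp : (q ++ lab s == p) = false.
  by apply/negP => /eqP Hrp; move: Hrd; rewrite Hrp pd.
rewrite Hrp map_cat /= (map_prune_id (dA1 _ pd)) (map_prune_id (dA2 _ pd)).
rewrite /= !map_cat !flatten_cat /= !in_cons !mem_cat IH //.
case Hxc: (x \in nodes c0); rewrite ?andbF ?andbT //.
have Hxd : rdc x \in Rd d by apply: (sub_Rd Hsub); apply: nodes_Rd.
have -> : (x == (s, q)) = false.
  by apply/negP => /eqP E; move: Hrd; rewrite -[q ++ lab s]/(rdc (s, q)) -E Hxd.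
have -> : (x \in flatten (map (@nodes F V) l1)) = false.
  apply/negP => /flat_In [e He Hx]; move: (dA1 _ Hxd).
  by rewrite (In_flat He (nodes_Rd Hx)).
have -> : (x \in flatten (map (@nodes F V) l2)) = false.
  apply/negP => /flat_In [e He Hx]; move: (dA2 _ Hxd).
  by rewrite (In_flat He (nodes_Rd Hx)).
by [].
Qed.

End S.

Theorem lemma1 (F : finType) (ar : F -> nat) (V : countType)
  (R : seq (term F V * term F V)) (lab : state F V -> pos)
  (HR : trs_ok ar R) (HL : label_ok ar R lab)
  (t t' : term F V) (ct ct' : ctree F V) (p : pos)
  (Ht : ground_term ar t) (Ht' : ground_term ar t')
  (Hct : conf_ok ar R lab ct) (Hct' : conf_ok ar R lab ct')
  (Hp : all (fun i => 0 < i) p) :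
  [/\
   (* (i) *)
   frag ct (completed ar R lab t) ->
     forall s q, (s, q) \in buds ct ->
       frag (grow ar R lab ct s q t) (completed ar R lab t),
   (* (ii) *)
   frag ct ct' -> frag (prune lab ct p) (prune lab ct' p),
   (* (iii) *)
   frag (prune lab ct p) ct,
   (* (iv) *)
   (exists l r, (l, r) \in R /\ rw_step l r p t t') ->
     prune lab (completed ar R lab t) p = prune lab (completed ar R lab t') p
 & (* (v): ct[p] = a subtree c of ct whose root (s,q) has q.L(s) = p *)
   frag ct (completed ar R lab t) ->
     forall c, subtree c ct -> root_read lab c = p ->
       forall x, (x \in nodes (prune lab ct p)) = (x \in nodes ct) && (x \notin nodes c)].
Proof.
have Hr0 := @reach0 F V ar R lab.
have G0 : forall s q, Good [::] s q by move=> s q o a H1 Ha; move: Ha; rewrite /=.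
split.
- move=> Hf s q _; rewrite /completed in Hf *.
  apply: (@grow_ok F V ar R lab HL t s q (Defs.tsize t).+1 ct _ [::] [::]) => //.
  by rewrite addn0.
- exact: prune_mono.
- exact: prune_frag.
- move=> [l [r [_ [u [sig [Hd Et Et']]]]]].
  have Hh : forall x, ~ pre p x -> hd_at t x = hd_at t' x.
    by move=> x Hx; rewrite Et Et' !hd_replace.
  rewrite /completed; apply: (prune_eq HL Hh (A := [::])) => //.
  + move=> o [h /imfsetP [l0 _ ->] /pos_moP [e]]; rewrite in_fset1 => /eqP -> -> /= Hq.
    by rewrite (pre_nil Hq).
  + by rewrite addn0.
  + by rewrite addn0.
- move=> Hf c Hsub Hr x; apply: pure_v Hsub Hr x.
  apply: uniq_from_count (frag_count lab Hf) _.
  exact: (U HL t (Defs.tsize t).+1 [::] Hr0).1.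
Qed.
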